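(* Suppose the validators who violate at least one of the slashing conditions I or II have total deposit strictly less than $\frac{1}{3}$ of the total deposit. Then no two conflicting checkpoints can both be finalized. Equivalently: if two conflicting checkpoints are both finalized, then validators holding at least $\frac13$ of the total deposit have violated slashing condition I or II.
   Context: Checkpoints form a rooted tree (the checkpoint tree) with root $r$. For a checkpoint $c$, its height $h(c)$ is the number of edges on the path from $c$ to $r$, so $h(r)=0$ and a child has height one more than its parent. Two checkpoints are conflicting if neither is an ancestor (or equal to, or a descendant) of the other. There is a fixed finite set of validators, each with a positive deposit; fractions of validators are always deposit-weighted. A vote is a signed message $\langle \nu, s, t, h(s), h(t)\rangle$ from validator $\nu$, where $s$ (source) and $t$ (target) are checkpoints and $s$ is a strict ancestor of $t$. A supermajority link $s\to t$ is an ordered pair of checkpoints such that validators holding at least $\frac23$ of the total deposit have published the vote with source $s$ and target $t$. A checkpoint $c$ is justified if $c=r$ or there is a supermajority link $c'\to c$ with $c'$ justified. A checkpoint $c$ is finalized if $c=r$, or $c$ is justified and there is a supermajority link $c\to c'$ where $c'$ is a direct child of $c$ in the checkpoint tree (so $h(c')=h(c)+1$). Slashing conditions: a validator $\nu$ violates a slashing condition if it publishes two distinct votes $\langle \nu,s_1,t_1,h(s_1),h(t_1)\rangle$ and $\langle \nu,s_2,t_2,h(s_2),h(t_2)\rangle$ such that either (I) $h(t_1)=h(t_2)$, or (II) $h(s_1)<h(s_2)<h(t_2)<h(t_1)$. *)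

(* Defs.v *)
From mathcomp Require Import all_boot.
Set Implicit Arguments. Unset Strict Implicit. Unset Printing Implicit Defensive.

Section Casper.
Variable C : Type.
Variable r : C.
Variable par : C -> C.      (* parent map; par r = r by convention *)
Variable h : C -> nat.

(* These
   imply iter (h c) par c = r, i.e. every checkpoint reaches the root. *)
Definition is_checkpoint_tree : Prop :=
  [/\ par r = r, h r = 0 & forall c, c <> r -> h c = (h (par c)).+1].

Definition anc (a c : C) : Prop := exists k, iter k par c = a.
Definition strict_anc (a c : C) : Prop := anc a c /\ a <> c.
Definition conflicting (a b : C) : Prop := ~ anc a b /\ ~ anc b a.

Variable V : finType.
Variable dep : V -> nat.
Variable pub : V -> C -> C -> bool. (* pub v s t : v published vote <v,s,t,h s,h t> *)

Definition weight (A : {set V}) : nat := \sum_(v in A) dep v.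
Definition total_deposit : nat := \sum_(v : V) dep v.

Definition sm_link (s t : C) : Prop :=
  2 * total_deposit <= 3 * \sum_(v | pub v s t) dep v.

Inductive justified : C -> Prop :=
| justified_root : justified r
| justified_link c' c : justified c' -> sm_link c' c -> justified c.

(* c' is a direct child of c iff par c' = c and c' <> r *)
Definition finalized (c : C) : Prop :=
  c = r \/ (justified c /\ exists c', [/\ par c' = c, c' <> r & sm_link c c']).

Definition slashable (v : V) : Prop :=
  exists s1 t1 s2 t2,
    [/\ pub v s1 t1, pub v s2 t2, (s1, t1) <> (s2, t2) &
        h t1 = h t2 \/ [/\ h s1 < h s2, h s2 < h t2 & h t2 < h t1]].
End Casper.

(* Main.v *)
From Stdlib Require Import Classical.
Require Import Defs.
From mathcomp Require Import all_boot.
From mathcomp Require Import zify.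

Set Implicit Arguments.

Lemma inter_w (V : finType) (dep : V -> nat) (P Q : pred V) :
  2 * \sum_(v : V) dep v <= 3 * \sum_(v | P v) dep v ->
  2 * \sum_(v : V) dep v <= 3 * \sum_(v | Q v) dep v ->
  \sum_(v : V) dep v <= 3 * weight dep [set v | P v && Q v].
Proof.
move=> HP HQ.
have key : \sum_(v | P v) dep v + \sum_(v | Q v) dep v <=
   \sum_(v : V) dep v + weight dep [set v | P v && Q v].
  rewrite /weight (big_mkcond P) (big_mkcond Q)
     (big_mkcond (fun v => v \in _)) -!big_split /=.
  apply: leq_sum => v _; rewrite inE; case: (P v); case: (Q v) => /=; lia.
lia.
Qed.

Lemma viol (C : Type) (h : C -> nat) (V : finType) (dep : V -> nat)
  (pub : V -> C -> C -> bool) s1 t1 s2 t2 :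
  sm_link dep pub s1 t1 -> sm_link dep pub s2 t2 -> (s1, t1) <> (s2, t2) ->
  (h t1 = h t2 \/ [/\ h s1 < h s2, h s2 < h t2 & h t2 < h t1]) ->
  exists S : {set V},
    (forall v, v \in S -> slashable h pub v) /\
    total_deposit dep <= 3 * weight dep S.
Proof.
move=> L1 L2 Hne Hc.
exists [set v | pub v s1 t1 && pub v s2 t2]; split.
  move=> v; rewrite inE => /andP[a b]; exists s1, t1, s2, t2; split => //.
exact: inter_w.
Qed.


Section Tree.
Lemma par_le (C : Type) (r : C) (par : C -> C) (h : C -> nat) :
  is_checkpoint_tree r par h -> forall c, h (par c) <= h c.
Proof.
case=> Hp Hr Hh c; case: (classic (c = r)) => [->|ne]; first by rewrite Hp.
by rewrite (Hh _ ne).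
Qed.

Lemma iter_le (C : Type) (r : C) (par : C -> C) (h : C -> nat) :
  is_checkpoint_tree r par h -> forall k c, h (iter k par c) <= h c.
Proof.
move=> T; elim=> [|k IH] c //=.
exact: leq_trans (par_le T _) (IH c).
Qed.

Lemma sanc_lt (C : Type) (r : C) (par : C -> C) (h : C -> nat) :
  is_checkpoint_tree r par h -> forall s t, strict_anc par s t -> h s < h t.
Proof.
move=> T s t [[k Hk] ne].
case: k Hk => [|k] Hk; first by case: ne.
rewrite iterSr in Hk.
have fixr : forall n, iter n par r = r.
  case: T => Hp _ _; elim=> //= n IH; by rewrite IH.
have tr : t <> r.
  by move=> E; apply: ne; rewrite -Hk E; case: (T) => -> _ _; rewrite fixr.
case: (T) => _ _ Hh; rewrite (Hh _ tr) ltnS -Hk.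
exact: (iter_le T).
Qed.

Lemma anc_trans (C : Type) (par : C -> C) a b c :
  anc par a b -> anc par b c -> anc par a c.
Proof. by move=> [k Hk] [l Hl]; exists (k + l); rewrite iterD Hl. Qed.

Lemma root_anc (C : Type) (r : C) (par : C -> C) (h : C -> nat) :
  is_checkpoint_tree r par h -> forall c, anc par r c.
Proof.
move=> T c; exists (h c).
suff H : forall n c, h c = n -> iter n par c = r by apply: H.
case: T => Hp Hr Hh.
elim=> [|n IH] {}c E.
  by case: (classic (c = r)) => // ne; rewrite Hh in E.
have ne : c <> r by move=> E'; rewrite E' Hr in E.
by rewrite iterSr; apply: IH; move: E; rewrite Hh // => -[].
Qed.
End Tree.
Unset Implicit Arguments.

Theorem theorem1 (C : Type) (r : C) (par : C -> C) (h : C -> nat)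
  (Htree : is_checkpoint_tree r par h)
  (V : finType) (dep : V -> nat) (Hdep : forall v, 0 < dep v)
  (pub : V -> C -> C -> bool)
  (Hvote : forall v s t, pub v s t -> strict_anc par s t)
  (c1 c2 : C) :
  conflicting par c1 c2 ->
  finalized r par dep pub c1 -> finalized r par dep pub c2 ->
  exists S : {set V},
    (forall v, v \in S -> slashable h pub v) /\
    total_deposit dep <= 3 * weight dep S.
Proof.
set G := exists S : {set V}, _.
case: (posnP (total_deposit dep)) => [T0|Tpos].
  by exists set0; split => [v|]; rewrite ?inE // T0.
have linkA : forall s t, sm_link dep pub s t -> strict_anc par s t.
  move=> s t L; case: (pickP (fun v => pub v s t)) => [v /Hvote //|none].
  move: L; rewrite /sm_link big_pred0 // /total_deposit; move: Tpos.
  rewrite /total_deposit; lia.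
have Hr : h r = 0 by case: Htree.
have Hh : forall c, c <> r -> h c = (h (par c)).+1 by case: Htree.
suff main : forall c1 c2, conflicting par c1 c2 -> h c1 <= h c2 ->
    finalized r par dep pub c1 -> justified r dep pub c2 -> G.
  move=> Hc F1 F2.
  have Jof : forall c, finalized r par dep pub c -> justified r dep pub c.
    by move=> c [->|[J _]] //; constructor.
  case: (leqP (h c1) (h c2)) => le; first exact: main Hc le F1 (Jof _ F2).
  apply: (main c2 c1) => //; last exact: Jof.
    by case: Hc.
  exact: ltnW.
move=> {}c1 {}c2 [nc12 nc21] le [E1|[J1 [c1' [P1 ne1 L1]]]].
  by case: nc12; rewrite E1; apply: root_anc Htree _.
have c1r : c1 <> r.
  by move=> E; case: nc12; rewrite E; apply: root_anc Htree _.
have h1' : h c1' = (h c1).+1 by rewrite Hh // P1.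
have [s0 [J0 L0]] : exists s0, justified r dep pub s0 /\ sm_link dep pub s0 c1.
  by case: J1 c1r => [//|c' c J L] _; exists c'.
suff claim : forall t, justified r dep pub t -> h c1 <= h t -> anc par c1 t \/ G.
  by move=> J2; case: (claim c2 J2 le).
move=> t; elim=> [|s {}t Js IH L].
  by rewrite Hr (Hh _ c1r).
have sat := linkA _ _ L; have hst := sanc_lt Htree sat.
move=> hle; case: (ltngtP (h t) (h c1)) hle => // [ht|ht] _; last first.
  case: (classic (t = c1)) => [->|ne]; first by left; exists 0.
  right; rewrite /G; apply: (viol h L L0); first by case.
  by left.
case: (ltngtP (h t) (h c1).+1) ht => // [ht|ht] _; last first.
  case: (classic ((s, t) = (c1, c1'))) => [[Es Et]|ne].
    by left; exists 1; rewrite Et /= P1.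
  by right; apply: (viol h L L1 ne); left; rewrite h1'.
case: (leqP (h c1) (h s)) => hs.
  case: (IH hs) => [A|]; last by right.
  by left; apply: anc_trans A (proj1 sat).
right; apply: (viol (s1 := s) (t1 := t) h L L1).
  by case=> _ E; move: ht; rewrite E h1' ltnn.
by right; split => //; rewrite h1'.
Qed.
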